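(* For every $n \ge 1$, $$ B^+_n(x) = 2(n-1)x\, B^+_{n-1}(x) + 2x(1-x) \frac{d B^+_{n-1}}{dx}(x) + B_{n-1}(x). $$ Moreover, as formal power series in $t$, $$ \sum_{n \ge 0} B^+_n(x) \frac{t^n}{n!} = \frac{e^t (e^{xt} - x e^t)}{e^{2xt} - x e^{2t}} \quad\text{and}\quad \sum_{n \ge 0} B^-_n(x) \frac{t^n}{n!} = \frac{x e^t (e^t - e^{xt})}{e^{2xt} - x e^{2t}}. $$
   Context: A signed permutation of $[n]$ is a set $S = \{a_1, \dots, a_n\}$ with $a_i \in \{i, -i\}$, together with a bijection $w : S \to S$. $B_n$ is the set of all of them. - An index $i \in \{0, \dots, n-1\}$ is a $B$-descent if $w(a_i) > w(a_{i+1})$, with $w(a_0) = 0$; $\mathrm{des}_B(w)$ is the number of $B$-descents. - $B_n(x) = \sum_{w \in B_n} x^{\mathrm{des}_B(w)}$, with $B_0(x) = 1$. - $B^+_n(x)$ (resp. $B^-_n(x)$) is the same sum restricted to $w$ with $w(a_n) > 0$ (resp. $< 0$), with $B^+_0(x) = 1$ and $B^-_0(x) = 0$. *)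

(* Defs.v *)
From HB Require Import structures.
From mathcomp Require Import all_boot all_order all_algebra all_fingroup.
Set Implicit Arguments. Unset Strict Implicit. Unset Printing Implicit Defensive.
Import Order.TTheory GRing.Theory Num.Theory.
Local Open Scope ring_scope.

(* A signed permutation of [n]: the sign pattern s chooses S = {a_1..a_n}
   with a_i = -i if s (i-1) else i, and p : {perm 'I_n} encodes the bijection
   w : S -> S, w(a_i) = a_{p(i)} (0-indexed on 'I_n). *)
Definition signed_perm (n : nat) : finType :=
  ({ffun 'I_n -> bool} * {perm 'I_n})%type.

Definition sp_a n (s : {ffun 'I_n -> bool}) (i : 'I_n) : int :=
  if s i then - (i.+1 : int) else (i.+1 : int).

Definition sp_w n (w : signed_perm n) (i : 'I_n) : int :=
  sp_a w.1 (w.2 i).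

(* value w(a_j) for j in 0..n, with w(a_0) = 0 *)
Definition sp_val n (w : signed_perm n) (j : nat) : int :=
  nth 0 (0 :: [seq sp_w w i | i <- enum 'I_n]) j.

Definition desB n (w : signed_perm n) : nat :=
  #|[set i : 'I_n | sp_val w i.+1 < sp_val w i]|.

Definition Bpoly (n : nat) : {poly rat} :=
  \sum_(w : signed_perm n) 'X^(desB w).

Definition Bplus (n : nat) : {poly rat} :=
  if n is 0 then 1 else \sum_(w : signed_perm n | 0 < sp_val w n) 'X^(desB w).

Definition Bminus (n : nat) : {poly rat} :=
  if n is 0 then 0 else \sum_(w : signed_perm n | sp_val w n < 0) 'X^(desB w).

(* Formal power series in t with coefficients in Q[x]: t^k-coefficient map. *)
Definition series := nat -> {poly rat}.

Definition ser_mul (f g : series) : series :=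
  fun N => \sum_(k < N.+1) f k * g (N - k)%N.

Definition ser_exp (c : {poly rat}) : series :=
  fun k => ((k`!)%:R^-1 : rat) *: c ^+ k.

Definition egf (P : nat -> {poly rat}) : series :=
  fun k => ((k`!)%:R^-1 : rat) *: P k.

(* Main.v *)
Require Import Defs.
From HB Require Import structures.
From mathcomp Require Import all_boot all_order all_algebra all_fingroup.
From mathcomp Require Import zify ring lra.
From Stdlib Require Import FunctionalExtensionality.
Import Order.TTheory GRing.Theory Num.Theory.
Set Implicit Arguments. Unset Strict Implicit. Unset Printing Implicit Defensive.
Local Open Scope ring_scope.

Fixpoint desf (a : int) (v : seq int) : nat :=
  match v with [::] => 0%N | b :: v' => addn (b < a)%R (desf b v') end.

Lemma desf_sum a v : desf a v =
  (\sum_(i < size v) nat_of_bool (nth 0 (a :: v) i.+1 < nth 0 (a :: v) i)%R)%N.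
Proof.
elim: v a => [|b v IH] a /=; first by rewrite big_ord0.
by rewrite big_ord_recl /= IH.
Qed.

Definition ins (i : nat) (y : int) (v : seq int) := take i v ++ y :: drop i v.

Definition bnd (N : nat) (z : int) := (- (N%:Z) < z) && (z < N%:Z).

Lemma desf_ins_mid N y v a i : (i < size v)%N -> all (bnd N) (a :: v) ->
  (y = N%:Z \/ y = - (N%:Z)) ->
  desf a (ins i y v) = addn (desf a v) (~~ (nth 0 (a :: v) i.+1 < nth 0 (a :: v) i)%R).
Proof.
move=> + + hy.
elim: v a i => [|b v IH] a i //= hi /andP[ha /andP[hb hv]].
case: i hi => [|i] hi.
  rewrite /ins /=.
  move: ha hb; rewrite /bnd => /andP[ha1 ha2] /andP[hb1 hb2].
  case: hy => ->; case: (b < a); lia.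
rewrite /ins /= -/(ins i y v) IH //; last by rewrite /= hb.
by rewrite addnA.
Qed.

Lemma desf_ins_end N y v a : all (bnd N) (a :: v) ->
  (y = N%:Z \/ y = - (N%:Z)) ->
  desf a (ins (size v) y v) = addn (desf a v) (y < 0)%R.
Proof.
rewrite /ins take_size drop_size.
elim: v a => [|b v IH] a /=.
  rewrite andbT /bnd => /andP[h1 h2] [] ->; lia.
move=> /andP[ha /andP[hb hv]] hy; rewrite IH ?addnA //= hb //.
Qed.
Definition vals n (w : signed_perm n) : seq int := [seq sp_w w i | i <- enum 'I_n].

Lemma size_vals n (w : signed_perm n) : size (vals w) = n.
Proof. by rewrite size_map size_enum_ord. Qed.

Lemma nth_vals n (w : signed_perm n) (k : 'I_n) : nth 0 (vals w) k = sp_w w k.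
Proof. by rewrite (nth_map k) ?size_enum_ord // nth_ord_enum. Qed.

Lemma sp_val_vals n (w : signed_perm n) j : sp_val w j = nth 0 (0 :: vals w) j.
Proof. by []. Qed.

Definition ext n (s : {ffun 'I_n -> bool}) (b : bool) : {ffun 'I_n.+1 -> bool} :=
  [ffun k => if unlift ord_max k is Some k' then s k' else b].

Definition fmap n (x : (signed_perm n * ('I_n.+1 * bool))%type) : signed_perm n.+1 :=
  (ext x.1.1 x.2.2, lift_perm x.2.1 ord_max x.1.2).

Lemma fmap_inj n : injective (@fmap n).
Proof.
move=> [[s q] [i b]] [[s' q'] [i' b']] /= [hs hp].
have hi : i = i'.
  apply: (@perm_inj _ (lift_perm i ord_max q)).
  by rewrite {2}hp !lift_perm_id.
subst i'.
have hq : q = q'.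
  apply/permP => k; apply: (@lift_inj _ ord_max).
  by rewrite -(lift_perm_lift i) hp lift_perm_lift.
subst q'.
have hb : b = b'.
  by move/ffunP: hs => /(_ ord_max); rewrite !ffunE unlift_none.
subst b'.
have -> : s = s'.
  apply/ffunP => k; move/ffunP: hs => /(_ (lift ord_max k)).
  by rewrite !ffunE liftK.
by [].
Qed.

Lemma fmap_bij n : bijective (@fmap n).
Proof.
apply: inj_card_bij; first exact: fmap_inj.
rewrite /signed_perm !card_prod !card_ffun !card_Sn !card_ord card_bool.
rewrite expnS factS; lia.
Qed.

Definition yv n (b : bool) : int := if b then - (n.+1)%:Z else (n.+1)%:Z.

Lemma spw_fmap_i n (w : signed_perm n) i b : sp_w (fmap (w, (i, b))) i = yv n b.
Proof.
by rewrite /sp_w /fmap /= lift_perm_id /sp_a ffunE unlift_none.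
Qed.

Lemma spw_fmap_lift n (w : signed_perm n) i b k :
  sp_w (fmap (w, (i, b))) (lift i k) = sp_w w k.
Proof.
by rewrite /sp_w /fmap /= lift_perm_lift /sp_a ffunE liftK lift_max.
Qed.

Lemma vals_fmap n (w : signed_perm n) (i : 'I_n.+1) b :
  vals (fmap (w, (i, b))) = ins i (yv n b) (vals w).
Proof.
have hi : (i <= size (vals w))%N by rewrite size_vals -ltnS.
apply: (@eq_from_nth _ 0).
  by rewrite size_vals /ins size_cat /= size_takel // size_drop size_vals; move: hi; rewrite size_vals; lia.
move=> k; rewrite size_vals => hk.
rewrite (nth_vals _ (Ordinal hk)) /ins nth_cat size_takel //.
have hin := ltn_ord i.
case: (ltngtP k i) => hki.
- have hkn : (k < n)%N by lia.
  have -> : Ordinal hk = lift i (Ordinal hkn).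
    by apply: val_inj; rewrite /= /bump leqNgt hki.
  by rewrite spw_fmap_lift nth_take // (nth_vals _ (Ordinal hkn)).
- have hkn : (k.-1 < n)%N by lia.
  have -> : Ordinal hk = lift i (Ordinal hkn).
    apply: val_inj; rewrite /= /bump; case: k hk hki {hkn} => //= k hk hki; have -> : (i <= k)%N by lia.
    by rewrite add1n.
  rewrite spw_fmap_lift.
  case hd: (k - i)%N => [|j]; first by lia.
  rewrite /= nth_drop -(nth_vals _ (Ordinal hkn)) /=; congr (nth _ _ _).
  lia.
- have -> : Ordinal hk = i by apply: val_inj.
  by rewrite spw_fmap_i hki subnn.
Qed.

Lemma bnd_vals n (w : signed_perm n) : all (bnd n.+1) (0 :: vals w).
Proof.
rewrite /=.
apply/allP => z /mapP [k _ ->].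
rewrite /sp_w /sp_a /bnd; have := ltn_ord (w.2 k).
by case: (w.1 (w.2 k)) => h; apply/andP; split; lia.
Qed.

Lemma yv_cases n b : yv n b = (n.+1)%:Z \/ yv n b = - (n.+1)%:Z.
Proof. by case: b; [right|left]. Qed.

Lemma desB_vals n (w : signed_perm n) : desB w = desf 0 (vals w).
Proof.
rewrite (desf_sum 0 (vals w)) /desB -sum1_card big_mkcond /=.
under eq_bigr => i _ do rewrite inE !sp_val_vals.
move: (vals w) (size_vals w); clear w => v <-.
by apply: eq_bigr => i _; case: ifP.
Qed.

Definition cw n (w : signed_perm n) (i : nat) : bool :=
  (nth 0 (0 :: vals w) i.+1 < nth 0 (0 :: vals w) i).

Lemma desB_fmap_mid n (w : signed_perm n) (i : 'I_n) b :
  desB (fmap (w, (widen_ord (leqnSn n) i, b))) = addn (desf 0 (vals w)) (~~ cw w i).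
Proof.
rewrite desB_vals vals_fmap /=.
rewrite (@desf_ins_mid n.+1) ?size_vals ?bnd_vals //; exact: yv_cases.
Qed.

Lemma desB_fmap_end n (w : signed_perm n) b :
  desB (fmap (w, (ord_max, b))) = addn (desf 0 (vals w)) b.
Proof.
rewrite desB_vals vals_fmap /=.
have := @desf_ins_end n.+1 (yv n b) (vals w) 0 (bnd_vals w) (yv_cases n b).
rewrite size_vals => ->.
by congr addn; case: b => /=; lia.
Qed.

Lemma last_fmap_mid n (w : signed_perm n) (i : 'I_n) b :
  sp_val (fmap (w, (widen_ord (leqnSn n) i, b))) n.+1 = sp_val w n.
Proof.
rewrite !sp_val_vals vals_fmap /= /ins nth_cat size_takel ?size_vals; last by apply: ltnW.
have hi := ltn_ord i.
rewrite ltnNge (ltnW hi) /=.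
case hd: (n - i)%N => [|j]; first by lia.
rewrite /= nth_drop.
have nth0S : forall (v : seq int) m, (0 < m)%N -> nth 0 (0 :: v) m = nth 0 v m.-1.
  by move=> v [].
rewrite nth0S; last by lia.
by congr (nth _ _ _); lia.
Qed.

Lemma last_fmap_end n (w : signed_perm n) b :
  sp_val (fmap (w, (ord_max, b))) n.+1 = yv n b.
Proof.
rewrite !sp_val_vals vals_fmap /= /ins nth_cat size_takel ?size_vals //.
by rewrite ltnn subnn.
Qed.

Lemma sum_fmap n (G : signed_perm n.+1 -> {poly rat}) :
  \sum_(w : signed_perm n.+1) G w =
  \sum_(w : signed_perm n) \sum_(i : 'I_n.+1) \sum_(b : bool) G (fmap (w, (i, b))).
Proof.
rewrite (reindex (@fmap n) (onW_bij _ (fmap_bij n))) /=.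
under [RHS]eq_bigr => w _ do rewrite pair_big /=.
rewrite pair_big /=.
by apply: eq_bigr => [[w [i b]]] _.
Qed.

Lemma dsum n (w : signed_perm n) : desf 0 (vals w) = (\sum_(i < n) cw w i)%N.
Proof.
rewrite -desB_vals /desB -sum1_card big_mkcond /=.
by apply: eq_bigr => i _; rewrite inE /cw -!sp_val_vals; case: ifP.
Qed.

Lemma sum_split n (c : 'I_n -> bool) d :
  \sum_(i < n) ('X^(addn d (~~ c i)) : {poly rat}) =
  ((\sum_(i < n) c i)%N)%:R * 'X^d + ((n - \sum_(i < n) c i)%N)%:R * 'X^(d.+1).
Proof.
have -> : (n - \sum_(i < n) c i)%N = (\sum_(i < n) ~~ c i)%N.
  have : (\sum_(i < n) c i + \sum_(i < n) ~~ c i)%N = n.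
    rewrite -big_split /=.
    rewrite (eq_bigr (fun _ => 1%N)); last by move=> i _; case: (c i).
    by rewrite sum1_card card_ord.
  lia.
rewrite !natr_sum !mulr_suml -big_split /=.
by apply: eq_bigr => i _; case: (c i) => /=; rewrite ?addn0 ?addn1 ?mul1r ?mul0r ?addr0 ?add0r.
Qed.

Lemma X_derivXn d : 'X * ('X^d)^`() = d%:R * ('X^d : {poly rat}).
Proof.
rewrite derivXn; case: d => [|d] /=; first by rewrite mulr0n mulr0 mul0r.
by rewrite mulrnAr -exprS mulr_natl.
Qed.

Lemma deriv_sum (I : finType) (F : I -> {poly rat}) :
  (\sum_(i : I) F i)^`() = \sum_(i : I) (F i)^`().
Proof. exact: raddf_sum. Qed.

Lemma inner_sum n (w : signed_perm n) :
  \sum_(i : 'I_n.+1) \sum_(b : bool) ('X^(desB (fmap (w, (i, b)))) : {poly rat}) =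
  (((\sum_(i < n) cw w i)%N)%:R * 'X^(desB w) + ((n - \sum_(i < n) cw w i)%N)%:R * 'X^((desB w).+1)) *+ 2
  + ('X^(desB w) + 'X^((desB w).+1)).
Proof.
rewrite big_ord_recr /= big_bool /= !desB_fmap_end addn1 addn0 desB_vals.
rewrite -sum_split -sumrMnl; congr (_ + _).
  by apply: eq_bigr => i _; rewrite big_bool /= !desB_fmap_mid mulr2n.
by rewrite addrC.
Qed.

Lemma desB_le n (w : signed_perm n) : (desB w <= n)%N.
Proof. by rewrite /desB; apply: leq_trans (max_card _) _; rewrite card_ord. Qed.

Lemma Bpoly_rec n : Bpoly n.+1 = ((n.+1)%:R *+ 2 * 'X + 1 - 'X) * Bpoly n
   + ('X *+ 2 * (1 - 'X)) * (Bpoly n)^`().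
Proof.
rewrite /Bpoly sum_fmap deriv_sum !mulr_sumr -big_split /=.
apply: eq_bigr => w _; rewrite inner_sum.
have hc : (\sum_(i < n) cw w i)%N = desB w by rewrite desB_vals dsum.
rewrite hc natrB ?desB_le //.
have -> : 'X *+ 2 * (1 - 'X) * ('X^(desB w))^`() = (1 - 'X) *+ 2 * ('X * ('X^(desB w))^`()) :> {poly rat}.
  by ring.
rewrite X_derivXn exprS; ring.
Qed.

Lemma Bplus_rec n : Bplus n.+1 = (2 * n%:R) *: ('X * Bplus n)
               + ('X *+ 2 * (1 - 'X)) * (Bplus n)^`() + Bpoly n.
Proof.
have -> : Bplus n.+1 = \sum_(w : signed_perm n.+1) if 0 < sp_val w n.+1 then 'X^(desB w) else 0.
  by rewrite /Bplus big_mkcond.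
rewrite sum_fmap.
have E : forall w : signed_perm n,
  \sum_(i : 'I_n.+1) \sum_(b : bool) (if 0 < sp_val (fmap (w, (i, b))) n.+1 then 'X^(desB (fmap (w, (i, b)))) else 0)
  = (if 0 < sp_val w n then (((desB w)%:R * 'X^(desB w) + ((n - desB w)%N)%:R * 'X^((desB w).+1)) *+ 2) else 0) + 'X^(desB w) :> {poly rat}.
  move=> w; rewrite big_ord_recr /= big_bool /= !last_fmap_end /= !desB_fmap_end addn0.
  rewrite add0r -desB_vals; congr (_ + _).
  under eq_bigr => i _ do rewrite big_bool /= !last_fmap_mid !desB_fmap_mid.
  case: ifP => _; last by rewrite big1 // => i _; rewrite addr0.
  under eq_bigr => i _ do rewrite -mulr2n.
  by rewrite sumrMnl sum_split -dsum desB_vals.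
rewrite (eq_bigr _ (fun w _ => E w)) big_split /= -/(Bpoly n) -big_mkcond /=.
congr (_ + _).
case: n E => [|n] E.
  rewrite big_pred0 => [|w]; last by rewrite ltxx.
  by rewrite /Bplus -polyC1 derivC !mulr0 scale0r addr0.
rewrite /Bplus /= raddf_sum !mulr_sumr scaler_sumr -big_split /=.
apply: eq_bigr => w _.
rewrite natrB ?desB_le //.
have -> : 'X *+ 2 * (1 - 'X) * ('X^(desB w))^`() = (1 - 'X) *+ 2 * ('X * ('X^(desB w))^`()) :> {poly rat}.
  by ring.
rewrite X_derivXn exprS -mul_polyC rmorphM /= !rmorph_nat; ring.
Qed.

Lemma Bpoly0 : Bpoly 0 = 1.
Proof.
rewrite /Bpoly (eq_bigr (fun _ => 1)); last first.
  by move=> w _; have := desB_le w; rewrite leqn0 => /eqP ->; rewrite expr0.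
rewrite sumr_const /signed_perm card_prod card_ffun card_Sn !card_ord card_bool.
by [].
Qed.

Lemma spval_last n (w : signed_perm n.+1) : sp_val w n.+1 = sp_w w ord_max.
Proof. by rewrite sp_val_vals /= (nth_vals _ ord_max). Qed.

Lemma Bminus_eq n : Bminus n = Bpoly n - Bplus n.
Proof.
case: n => [|n]; first by rewrite /Bminus /Bplus Bpoly0 subrr.
rewrite /Bminus /Bplus /Bpoly [in RHS](bigID (fun w : signed_perm n.+1 => 0 < sp_val w n.+1)) /=.
rewrite addrAC subrr add0r; apply: eq_bigl => w.
rewrite spval_last /sp_w /sp_a.
by case: (w.1 (w.2 ord_max)); lia.
Qed.
Definition th (f : series) : series := fun n => n%:R * f n.
Definition tsh (f : series) : series := fun n => if n is m.+1 then f m else 0.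
Definition dx (f : series) : series := fun n => (f n)^`().
Definition sadd (f g : series) : series := fun n => f n + g n.
Definition ssub (f g : series) : series := fun n => f n - g n.
Definition smul (c : {poly rat}) (f : series) : series := fun n => c * f n.

Ltac fext := apply: functional_extensionality => n.

Lemma mulDl f g h : ser_mul (sadd f g) h = sadd (ser_mul f h) (ser_mul g h).
Proof. fext; rewrite /ser_mul /sadd -big_split; apply: eq_bigr => k _; exact: mulrDl. Qed.
Lemma mulDr f g h : ser_mul f (sadd g h) = sadd (ser_mul f g) (ser_mul f h).
Proof. fext; rewrite /ser_mul /sadd -big_split; apply: eq_bigr => k _; exact: mulrDr. Qed.
Lemma mulBl f g h : ser_mul (ssub f g) h = ssub (ser_mul f h) (ser_mul g h).
Proof. fext; rewrite /ser_mul /ssub -sumrB; apply: eq_bigr => k _; exact: mulrBl. Qed.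
Lemma mulBr f g h : ser_mul f (ssub g h) = ssub (ser_mul f g) (ser_mul f h).
Proof. fext; rewrite /ser_mul /ssub -sumrB; apply: eq_bigr => k _; exact: mulrBr. Qed.
Lemma smul_mull c f g : ser_mul (smul c f) g = smul c (ser_mul f g).
Proof. fext; rewrite /ser_mul /smul mulr_sumr; apply: eq_bigr => k _; by rewrite mulrA. Qed.
Lemma smul_mulr c f g : ser_mul f (smul c g) = smul c (ser_mul f g).
Proof. fext; rewrite /ser_mul /smul mulr_sumr; apply: eq_bigr => k _; ring. Qed.
Lemma tsh_mull f g : ser_mul (tsh f) g = tsh (ser_mul f g).
Proof.
fext; rewrite /ser_mul /tsh; case: n => [|n]; first by rewrite big_ord1 mul0r.
by rewrite big_ord_recl /= mul0r add0r.
Qed.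
Lemma tsh_mulr f g : ser_mul f (tsh g) = tsh (ser_mul f g).
Proof.
fext; rewrite /ser_mul /tsh; case: n => [|n]; first by rewrite big_ord1 mulr0.
rewrite big_ord_recr /= subnn mulr0 addr0; apply: eq_bigr => k _ /=.
by rewrite subSn // -ltnS.
Qed.
Lemma th_mul f g : th (ser_mul f g) = sadd (ser_mul (th f) g) (ser_mul f (th g)).
Proof.
fext; rewrite /ser_mul /th /sadd mulr_sumr -big_split; apply: eq_bigr => k _ /=.
have hk : (k <= n)%N by rewrite -ltnS.
rewrite -{1}(subnKC hk) natrD; ring.
Qed.
Lemma dx_mul f g : dx (ser_mul f g) = sadd (ser_mul (dx f) g) (ser_mul f (dx g)).
Proof.
fext; rewrite /ser_mul /dx /sadd raddf_sum -big_split; apply: eq_bigr => k _ /=.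
exact: derivM.
Qed.
Lemma th_add f g : th (sadd f g) = sadd (th f) (th g).
Proof. fext; rewrite /th /sadd mulrDr. done. Qed.

Definition c2X : {poly rat} := 'X *+ 2 * (1 - 'X).
Definition Lop (f : series) : series :=
  ssub (ssub (th f) (smul ('X *+ 2) (tsh (th f)))) (tsh (smul c2X (dx f))).

Lemma Lop_mul f g : Lop (ser_mul f g) = sadd (ser_mul (Lop f) g) (ser_mul f (Lop g)).
Proof.
rewrite /Lop th_mul dx_mul !mulBl !mulBr !smul_mull !smul_mulr !tsh_mull !tsh_mulr.
rewrite !smul_mull !smul_mulr.
fext; rewrite /ssub /sadd /smul /tsh; case: n => [|n]; ring.
Qed.

Definition Rel (a b : {poly rat}) (e f : series) :=
  forall n, Lop f n = tsh (smul a f) n + smul b (tsh (tsh f)) n + e n.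

Lemma Lop_S f n : (n.+1)%:R * f n.+1 = Lop f n.+1 + 'X *+ 2 * (n%:R * f n) + c2X * (f n)^`().
Proof. rewrite /Lop /ssub /th /tsh /smul /dx /=; ring. Qed.

Lemma natr_poly_neq0 n : (n.+1)%:R != 0 :> {poly rat}.
Proof. by rewrite -(rmorph_nat (@polyC rat)) polyC_eq0 pnatr_eq0. Qed.

Lemma Rel_uniq a b e f g : f 0%N = g 0%N -> Rel a b e f -> Rel a b e g -> f = g.
Proof.
move=> h0 hf hg.
suff H : forall n, forall k, (k <= n)%N -> f k = g k.
  by fext; apply: (H n).
elim=> [|n IH] k hk; first by move: hk; rewrite leqn0 => /eqP ->.
rewrite leq_eqVlt in hk; case/orP: hk => [/eqP -> | hk]; last by apply: IH.
apply: (mulfI (natr_poly_neq0 n)).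
rewrite !Lop_S hf hg /tsh /smul (IH n (leqnn n)).
case: n IH => [|n] IH //.
by rewrite (IH n (leqnSn n)).
Qed.

Lemma fact_neq0 n : (n`!)%:R != 0 :> rat.
Proof. by rewrite pnatr_eq0 -lt0n fact_gt0. Qed.

Lemma factS_inv n : (n.+1)%:R * ((n.+1)`!)%:R^-1 = (n`!)%:R^-1 :> rat.
Proof.
rewrite factS natrM invfM mulrA divff ?mul1r //.
by rewrite pnatr_eq0.
Qed.

Lemma Lop_egf q n : Lop (egf q) n.+1 =
  (n`!)%:R^-1 *: (q n.+1 - 'X *+ 2 * (n%:R * q n) - c2X * (q n)^`()).
Proof.
rewrite /Lop /ssub /th /tsh /smul /dx /egf /=.
rewrite derivZ !scalerBr -!scalerAr.
rewrite [in LHS]mulr_natl -scaler_nat scalerA mulrC factS_inv.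
by [].
Qed.

Lemma Lop_egf0 q : Lop (egf q) 0%N = 0.
Proof. rewrite /Lop /ssub /th /tsh /smul /dx /= mul0r mulr0; ring. Qed.

Lemma tsh_egf q n : tsh (egf q) n.+1 = (n`!)%:R^-1 *: q n.
Proof. by []. Qed.

Lemma tsh2_egf q n : tsh (tsh (egf q)) n.+1 = (n`!)%:R^-1 *: (n%:R * q n.-1).
Proof.
case: n => [|n]; first by rewrite /= mul0r scaler0.
rewrite /= /egf mulr_natl -scaler_nat scalerA.
by rewrite mulrC factS_inv.
Qed.

Lemma Rel_egf a b r q :
  (forall n, q n.+1 - 'X *+ 2 * (n%:R * q n) - c2X * (q n)^`()
     = a * q n + b * (n%:R * q n.-1) + r n) ->
  Rel a b (tsh (egf r)) (egf q).
Proof.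
move=> H [|n].
  by rewrite Lop_egf0 /tsh /smul /= !mulr0 !addr0.
rewrite Lop_egf H /= /smul tsh2_egf /egf -!scalerAr !scalerDr.
done.
Qed.

Definition zs : series := fun _ => 0.
Lemma tsh_egf0 : tsh (egf (fun _ => 0)) = zs.
Proof. fext; case: n => [|n] //=; rewrite /egf scaler0. done. Qed.
Lemma mul0s g : ser_mul zs g = zs.
Proof. fext; rewrite /ser_mul big1 // => k _; rewrite mul0r. done. Qed.
Lemma muls0 g : ser_mul g zs = zs.
Proof. fext; rewrite /ser_mul big1 // => k _; rewrite mulr0. done. Qed.

Lemma Rel_fun a b e f : Rel a b e f ->
  Lop f = sadd (sadd (tsh (smul a f)) (smul b (tsh (tsh f)))) e.
Proof. move=> H; fext; exact: H. Qed.

Definition dd (k : nat) : {poly rat} := ('X *+ 2) ^+ k - 'X * (2%:P) ^+ k.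
Definition cK (k : nat) : {poly rat} := (1 - 'X) * ('X + 1) ^+ k.
Definition c2 (k : nat) : {poly rat} := ('X + 1) ^+ k - 'X * (2%:P) ^+ k.

Lemma Rel_D : Rel ('X *+ 2) (- ('X *+ 4)) zs (egf dd).
Proof.
rewrite -tsh_egf0; apply: Rel_egf => n.
rewrite /dd /c2X derivB derivM derivX !deriv_exp derivC derivMn derivX.
case: n => [|m] /=; first by rewrite !expr0 !expr1; ring.
rewrite !exprS; ring.
Qed.

Lemma Rel_H : Rel (1 + 'X) 0 zs (egf Bpoly).
Proof.
rewrite -tsh_egf0; apply: Rel_egf => n.
rewrite Bpoly_rec /c2X; ring.
Qed.

Lemma Rel_G : Rel 0 0 (tsh (egf Bpoly)) (egf Bplus).
Proof.
apply: Rel_egf => n.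
rewrite Bplus_rec /c2X -mul_polyC; ring.
Qed.

Definition Ds := egf dd.
Definition Ks := ser_mul Ds (egf Bpoly).
Definition K2s := ser_mul Ds (egf Bplus).

Lemma Rel_K : Rel (1 + 'X *+ 3) (- ('X *+ 4)) zs Ks.
Proof.
move=> n; rewrite /Ks Lop_mul (Rel_fun Rel_D) (Rel_fun Rel_H).
rewrite !(mulDl, mulDr, smul_mull, smul_mulr, tsh_mull, tsh_mulr, mul0s, muls0).
rewrite /sadd /smul /tsh /zs; case: n => [|[|m]] /=; ring.
Qed.

Lemma Rel_cK : Rel (1 + 'X *+ 3) (- ('X *+ 4)) zs (egf cK).
Proof.
rewrite -tsh_egf0; apply: Rel_egf => n.
rewrite /cK /c2X derivM derivB derivC derivX deriv_exp derivD derivX derivC.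
case: n => [|m] /=; first by rewrite !expr0; ring.
rewrite !exprS; ring.
Qed.

Lemma Ks_eq : Ks = egf cK.
Proof.
apply: (Rel_uniq _ Rel_K Rel_cK).
by rewrite /Ks /ser_mul big_ord1 /Ds /egf /dd /cK Bpoly0 /= invr1 !scale1r !expr0; ring.
Qed.

Lemma Rel_K2 : Rel ('X *+ 2) (- ('X *+ 4)) (tsh (egf cK)) K2s.
Proof.
move=> n; rewrite /K2s Lop_mul (Rel_fun Rel_D) (Rel_fun Rel_G).
rewrite !(mulDl, mulDr, smul_mull, smul_mulr, tsh_mull, tsh_mulr, mul0s, muls0).
rewrite -/Ks Ks_eq.
rewrite /sadd /smul /tsh /zs; case: n => [|[|m]] /=; ring.
Qed.

Lemma Rel_c2 : Rel ('X *+ 2) (- ('X *+ 4)) (tsh (egf cK)) (egf c2).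
Proof.
apply: Rel_egf => n.
rewrite /cK /c2 /c2X derivB derivM derivX !deriv_exp derivC derivD derivX derivC.
case: n => [|m] /=; first by rewrite !expr0; ring.
rewrite !exprS; ring.
Qed.

Lemma K2s_eq : K2s = egf c2.
Proof.
apply: (Rel_uniq _ Rel_K2 Rel_c2).
by rewrite /K2s /ser_mul big_ord1 /Ds /egf /dd /c2 /Bplus /= invr1 !scale1r !expr0; ring.
Qed.

Lemma egf_mul p q N : ser_mul (egf p) (egf q) N =
  (N`!)%:R^-1 *: \sum_(k < N.+1) (p k * q (N - k)%N) *+ 'C(N, k).
Proof.
rewrite /ser_mul scaler_sumr; apply: eq_bigr => k _.
have hk : (k <= N)%N by rewrite -ltnS.
rewrite /egf -scalerAl -scalerAr scalerA -scaler_nat scalerA.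
congr (_ *: _).
rewrite -(bin_fact hk) !natrM.
have h1 := fact_neq0 k; have h2 := fact_neq0 (N - k).
have h3 : ('C(N, k))%:R != 0 :> rat by rewrite pnatr_eq0 -lt0n bin_gt0.
by rewrite !invfM [RHS]mulrC mulVKf.
Qed.

Lemma sum_binX N : \sum_(k < N.+1) ('X ^+ (N - k)%N : {poly rat}) *+ 'C(N, k) = ('X + 1) ^+ N.
Proof. by rewrite exprDn; apply: eq_bigr => k _; rewrite expr1n mulr1. Qed.

Lemma sum_bin1 N : \sum_(k < N.+1) (1 : {poly rat}) *+ 'C(N, k) = (2%:P) ^+ N.
Proof.
have -> : (2%:P : {poly rat}) = 1 + 1 by ring.
by rewrite exprDn; apply: eq_bigr => k _; rewrite !expr1n mulr1.
Qed.

Theorem proposition7p7 :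
  (forall n : nat, (1 <= n)%N ->
     Bplus n = (2 * (n.-1)%:R) *: ('X * Bplus n.-1)
               + ('X *+ 2 * (1 - 'X)) * (Bplus n.-1)^`()
               + Bpoly n.-1)
  /\
  (forall N : nat,
     ser_mul (fun k => ser_exp ('X *+ 2) k - 'X * ser_exp 2%:P k) (egf Bplus) N
     = ser_mul (ser_exp 1) (fun k => ser_exp 'X k - 'X * ser_exp 1 k) N)
  /\
  (forall N : nat,
     ser_mul (fun k => ser_exp ('X *+ 2) k - 'X * ser_exp 2%:P k) (egf Bminus) N
     = 'X * ser_mul (ser_exp 1) (fun k => ser_exp 1 k - ser_exp 'X k) N).
Proof.
have hD : (fun k => ser_exp ('X *+ 2) k - 'X * ser_exp 2%:P k) = Ds.
  by fext; rewrite /ser_exp /Ds /egf /dd scalerBr scalerAr.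
have hE : forall (c : {poly rat}), ser_exp c = egf (fun k => c ^+ k) by [].
split; first by case=> [|n] //= _; exact: Bplus_rec.
rewrite hD; split=> N.
  rewrite -/K2s K2s_eq.
  have -> : (fun k => ser_exp 'X k - 'X * ser_exp 1 k) = egf (fun k => 'X ^+ k - 'X * 1 ^+ k).
    by fext; rewrite /ser_exp /egf scalerBr scalerAr.
  rewrite hE egf_mul /egf /c2; congr (_ *: _).
  under eq_bigr => k _ do rewrite !expr1n mul1r mulr1 mulrnBl.
  by rewrite sumrB sum_binX -sum_bin1 mulr_sumr; congr (_ - _); apply: eq_bigr => k _; rewrite mulrnAr mulr1.
have -> : egf Bminus = ssub (egf Bpoly) (egf Bplus).
  by fext; rewrite /egf /ssub Bminus_eq scalerBr.
rewrite mulBr -/Ks -/K2s Ks_eq K2s_eq.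
have -> : (fun k => ser_exp 1 k - ser_exp 'X k) = egf (fun k => 1 ^+ k - 'X ^+ k).
  by fext; rewrite /ser_exp /egf scalerBr.
rewrite hE egf_mul /ssub /egf /cK /c2 -scalerBr -scalerAr; congr (_ *: _).
under eq_bigr => k _ do rewrite !expr1n mul1r mulrnBl.
rewrite sumrB sum_binX sum_bin1; ring.
Qed.
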